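(* A minimal prime graph complement has no vertex of degree $1$.
   Context: All graphs are finite and simple. A graph $G$ is a minimal prime graph complement if $G$ has at least $2$ vertices and: (1) the complement $\overline{G}$ is connected; (2) $G$ is triangle-free; (3) $G$ is $3$-colorable (has a proper vertex coloring with $3$ colors); (4) $G$ is edge-maximal with respect to (2) and (3), i.e. for any two distinct nonadjacent vertices $u,v$ of $G$, the graph obtained by adding the edge $uv$ to $G$ either contains a triangle or is not $3$-colorable. *)

(* Defs.v *)
From mathcomp Require Import all_boot.
Set Implicit Arguments. Unset Strict Implicit. Unset Printing Implicit Defensive.

Definition simple_graph (T : finType) (e : rel T) : Prop :=
  symmetric e /\ irreflexive e.

Definition compl_rel (T : finType) (e : rel T) : rel T :=
  [rel x y | (x != y) && ~~ e x y].

Definition connected_graph (T : finType) (e : rel T) : Prop :=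
  forall x y : T, connect e x y.

Definition triangle_free (T : finType) (e : rel T) : Prop :=
  forall x y z : T, ~ (e x y /\ e y z /\ e x z).

Definition proper_coloring (T : finType) (k : nat) (e : rel T) (c : T -> 'I_k) : Prop :=
  forall x y : T, e x y -> c x != c y.

Definition colorable (T : finType) (k : nat) (e : rel T) : Prop :=
  exists c : T -> 'I_k, proper_coloring e c.

Definition add_edge (T : finType) (e : rel T) (u v : T) : rel T :=
  [rel x y | [|| e x y, (x == u) && (y == v) | (x == v) && (y == u)]].

Definition minimal_prime_graph_complement (T : finType) (e : rel T) : Prop :=
  [/\ simple_graph e /\ 1 < #|T|,
      connected_graph (compl_rel e),
      triangle_free e,
      colorable 3 e
    & forall u v : T, u != v -> ~~ e u v ->
        ~ triangle_free (add_edge e u v) \/ ~ colorable 3 (add_edge e u v)].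

Definition degree (T : finType) (e : rel T) (x : T) : nat := #|[set y | e x y]|.

(* Main.v *)
Require Import Defs.
From mathcomp Require Import all_boot.
Set Implicit Arguments. Unset Strict Implicit. Unset Printing Implicit Defensive.

Lemma avoid2 (a b : 'I_3) : exists k : 'I_3, (k != a) && (k != b).
Proof.
have: ~~ ([set: 'I_3] \subset [set a; b]).
  apply/negP => /subset_leq_card; rewrite cardsT card_ord cards2.
  by case: (a != b).
case/subsetPn => k _; rewrite in_set2 negb_or => H; by exists k.
Qed.

Theorem lemma3 (T : finType) (e : rel T) :
  minimal_prime_graph_complement e -> forall x : T, degree e x != 1.
Proof.
case=> [[[sym irr] _] conn tri [c cP] maxi] x.
apply/negP => /cards1P [y Hy].
have exy z : e x z = (z == y).
  by have := congr1 (fun A : {set T} => z \in A) Hy; rewrite /= !inE.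
have xy : x != y.
  by apply/negP => /eqP E; have := exy y; rewrite eqxx -E irr.
have ally z : z != y -> e y z.
  move=> zy; case: (eqVneq z x) => [->|zx]; first by rewrite sym exy eqxx.
  apply/negPn/negP => Nyz.
  have Nxz : ~~ e x z by rewrite exy.
  set f := add_edge e x z.
  have fx w : f x w = (w == y) || (w == z).
    by rewrite /f /add_edge /= eqxx exy (eq_sym x z) (negbTE zx) /= orbF.
  have fsym : symmetric f.
    move=> u w; rewrite /f /add_edge /= sym.
    by case: (u == x) (w == z) (u == z) (w == x) => [] [] [] [] //=; rewrite ?orbF ?orbT.
  have fe u w : u != x -> w != x -> f u w = e u w.
    move=> ux wx; rewrite /f /add_edge /= (negbTE ux) (negbTE wx) /=.
    by rewrite andbF orbF.
  have yx : y != x by rewrite eq_sym.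
  have [] := maxi x z; [by rewrite eq_sym | exact: Nxz | | ].
  - case; move=> a b d [Hab [Hbd Had]].
    have key : forall p q r, f p q -> f q r -> f p r -> p != x.
      move=> p q r Hpq Hqr Hpr; apply/negP => /eqP Ep; subst p.
      move: Hpq Hpr; rewrite !fx => Hq Hr.
      have qx : q != x by case/orP: Hq => /eqP ->.
      have rx : r != x by case/orP: Hr => /eqP ->.
      move: Hqr; rewrite fe //.
      have N1 : e y z = false by apply/negbTE.
      have N2 : e z y = false by rewrite sym.
      by case/orP: Hq => /eqP -> ; case/orP: Hr => /eqP ->; rewrite ?irr ?N1 ?N2.
    have ax : a != x by apply: (key a b d).
    have bx : b != x by apply: (key b a d); rewrite // fsym.
    have dx : d != x by apply: (key d b a); rewrite // fsym.
    move: Hab Hbd Had; rewrite -/f !fe // => H1 H2 H3; exact: (tri a b d).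
  - case; have [k /andP [ky kz]] := avoid2 (c y) (c z).
    exists (fun w => if w == x then k else c w) => u w.
    change (f u w -> (if u == x then k else c u) != (if w == x then k else c w)).
    have gen : forall p q, p == x -> f p q -> (if p == x then k else c p) != (if q == x then k else c q).
      move=> p q /eqP -> ; rewrite fx eqxx => Hq.
      have qx : q != x by case/orP: Hq => /eqP ->.
      by rewrite (negbTE qx); case/orP: Hq => /eqP ->.
    case: (eqVneq u x) => ux.
      by subst u => H; have := gen x w (eqxx x) H; rewrite eqxx.
    case: (eqVneq w x) => wx.
      subst w.
      by rewrite fsym => H; have := gen x u (eqxx x) H; rewrite eqxx (negbTE ux) eq_sym.
    move=> Huw; apply: cP; by rewrite -fe.
have := conn y x; case/connectP => p.
case: p => [_ /= E|p0 p /= /andP [H _] _]; first by move: xy; rewrite E eqxx.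
by case/andP: H => Hne; rewrite ally // eq_sym.
Qed.
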